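(* Let $k\ge1$, let $Z^j\in\mathbb{R}^{n\times m_j}$ with $m_j\ge1$ for $j=1,\dots,k$, let $Z=[Z^1,\dots,Z^k]\in\mathbb{R}^{n\times m}$ with $m=\sum_j m_j$, and let $\epsilon>0$. Then $$\sum_{j=1}^k\frac{m_j}{2}\log\det\left(I+\frac{n}{m_j\epsilon^2}Z^j(Z^j)^{*}\right)\le\frac{m}{2}\log\det\left(I+\frac{n}{m\epsilon^2}ZZ^{*}\right)\le\sum_{j=1}^k\frac{m}{2}\log\det\left(I+\frac{n}{m\epsilon^2}Z^j(Z^j)^{*}\right).$$ The first inequality is an equality if and only if $\frac{Z^1(Z^1)^*}{m_1}=\frac{Z^2(Z^2)^*}{m_2}=\cdots=\frac{Z^k(Z^k)^*}{m_k}$, and the second inequality is an equality if and only if $(Z^{j_1})^{*}Z^{j_2}=0$ for all $1\le j_1<j_2\le k$.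
   Context: $^{*}$ denotes transpose; $I$ denotes the $n\times n$ identity. *)

(* Defs.v *)
From HB Require Import structures.
From mathcomp Require Import all_boot all_order all_algebra.
From mathcomp Require Import all_classical all_reals all_analysis.
Set Implicit Arguments. Unset Strict Implicit. Unset Printing Implicit Defensive.
Import Order.TTheory GRing.Theory Num.Theory.
Local Open Scope ring_scope.

Definition logdet_rate (R : realType) (n p : nat) (eps : R) (A : 'M[R]_(n, p)) : R :=
  ln (\det (1%:M + (n%:R / (p%:R * eps ^+ 2)) *: (A *m A^T))).

(* Main.v *)
Require Import Defs.
From HB Require Import structures.
From mathcomp Require Import all_boot all_order all_algebra.
From mathcomp Require Import all_classical all_reals all_analysis.
From mathcomp Require Import ring lra.
Import Order.TTheory GRing.Theory Num.Theory.
Local Open Scope ring_scope.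

Module LogDetAux.
Set Implicit Arguments. Unset Strict Implicit. Unset Printing Implicit Defensive.

Section Core.
Variable R : realFieldType.

Definition qf n (A : 'M[R]_n) (x : 'cV[R]_n) : R := (x^T *m A *m x) 0 0.
Definition psd n (A : 'M[R]_n) := A^T = A /\ forall x, 0 <= qf A x.
Definition pd n (A : 'M[R]_n) := A^T = A /\ forall x, x != 0 -> 0 < qf A x.

Lemma qfD n (A B : 'M[R]_n) x : qf (A + B) x = qf A x + qf B x.
Proof. by rewrite /qf mulmxDr mulmxDl mxE. Qed.

Lemma qfN n (A : 'M[R]_n) x : qf (- A) x = - qf A x.
Proof. by rewrite /qf mulmxN mulNmx mxE. Qed.

Lemma qfB n (A B : 'M[R]_n) x : qf (A - B) x = qf A x - qf B x.
Proof. by rewrite qfD qfN. Qed.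

Lemma qfZ n (A : 'M[R]_n) c x : qf (c *: A) x = c * qf A x.
Proof. by rewrite /qf -scalemxAr -scalemxAl mxE. Qed.

Lemma qf_sum n (I : finType) (F : I -> 'M[R]_n) x :
  qf (\sum_i F i) x = \sum_i qf (F i) x.
Proof. by rewrite /qf mulmx_sumr mulmx_suml summxE. Qed.

Lemma qf_mul n p (A : 'M[R]_n) (B : 'M[R]_(n, p)) x :
  qf (B^T *m A *m B) x = qf A (B *m x).
Proof. by rewrite /qf trmx_mul !mulmxA. Qed.

Definition nrm2 n (v : 'cV[R]_n) : R := (v^T *m v) 0 0.

Lemma nrm2E n (v : 'cV[R]_n) : nrm2 v = \sum_i v i 0 ^+ 2.
Proof. by rewrite /nrm2 mxE; apply: eq_bigr => i _; rewrite mxE expr2. Qed.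

Lemma nrm2_ge0 n (v : 'cV[R]_n) : 0 <= nrm2 v.
Proof. by rewrite nrm2E sumr_ge0 // => i _; rewrite sqr_ge0. Qed.

Lemma nrm2_eq0 n (v : 'cV[R]_n) : nrm2 v = 0 -> v = 0.
Proof.
rewrite nrm2E => /eqP; rewrite psumr_eq0 => [/allP H|i _]; last by rewrite sqr_ge0.
apply/matrixP => i j; rewrite (ord1 j) mxE.
by have := H i (mem_index_enum _); rewrite sqrf_eq0 => /eqP.
Qed.

Lemma qf1 n (x : 'cV[R]_n) : qf 1%:M x = nrm2 x.
Proof. by rewrite /qf mulmx1. Qed.

Lemma qf_gram n p (Z : 'M[R]_(n, p)) x : qf (Z *m Z^T) x = nrm2 (Z^T *m x).
Proof. by rewrite /qf /nrm2 trmx_mul trmxK !mulmxA. Qed.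

Lemma mx_ext0 m n (M : 'M[R]_(m, n)) : (forall x : 'cV_n, M *m x = 0) -> M = 0.
Proof.
move=> H; apply/matrixP => i j; have := H (delta_mx j 0).
move/matrixP/(_ i 0); rewrite !mxE => <-.
rewrite (bigD1 j) //= big1 ?addr0 => [|k /negbTE kj]; rewrite !mxE ?eqxx ?mulr1 //.
by rewrite kj mulr0.
Qed.


Definition blk n (a : R) (r : 'M[R]_(1, n)) (D : 'M[R]_n) : 'M[R]_(1 + n) :=
  block_mx a%:M r r^T D.
Definition sch n (a : R) (r : 'M[R]_(1, n)) (D : 'M[R]_n) : 'M[R]_n :=
  D - a^-1 *: (r^T *m r).

Lemma qf_blk n a (r : 'M[R]_(1, n)) D t y :
  qf (blk a r D) (col_mx t%:M y) = a * t ^+ 2 + 2 * t * (r *m y) 0 0 + qf D y.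
Proof.
rewrite /qf /blk tr_col_mx tr_scalar_mx mul_row_block mul_row_col !mulmxDl.
rewrite -trmx_mul -[t%:M *m r *m y]mulmxA.
move: (r *m y) (y^T *m D *m y) => u v.
rewrite !mxE !big_ord1 !mxE !big_ord1 !mxE /= !mulr1n. change (ord0 : 'I_1) with (0 : 'I_1). ring.
Qed.

Lemma qf_rr n (r : 'M[R]_(1, n)) y : qf (r^T *m r) y = (r *m y) 0 0 ^+ 2.
Proof.
rewrite /qf !mulmxA -trmx_mul -mulmxA; move: (r *m y) => u.
by rewrite !mxE big_ord1 mxE expr2.
Qed.

Lemma qf_sch n a (r : 'M[R]_(1, n)) D y :
  qf (sch a r D) y = qf D y - a^-1 * (r *m y) 0 0 ^+ 2.
Proof. by rewrite /sch qfB qfZ qf_rr. Qed.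

Lemma qf_blk_opt n a (r : 'M[R]_(1, n)) D y : a != 0 ->
  qf (blk a r D) (col_mx (- ((r *m y) 0 0 / a))%:M y) = qf (sch a r D) y.
Proof. move=> a0; rewrite qf_blk qf_sch; field. exact: a0. Qed.

Lemma qf_blk_ge n a (r : 'M[R]_(1, n)) D t y : 0 < a ->
  qf (sch a r D) y <= qf (blk a r D) (col_mx t%:M y).
Proof.
move=> a0; rewrite qf_blk qf_sch.
set b := (r *m y) 0 0; set d := qf D y.
have -> : a * t ^+ 2 + 2 * t * b + d = a * (t + b / a) ^+ 2 + (d - a^-1 * b ^+ 2).
  field; exact: lt0r_neq0.
by rewrite lerDr mulr_ge0 ?sqr_ge0 ?ltW.
Qed.

Lemma det_blk n a (r : 'M[R]_(1, n)) D : a != 0 ->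
  \det (blk a r D) = a * \det (sch a r D).
Proof.
move=> a0.
have -> : blk a r D = block_mx 1%:M 0 (a^-1 *: r^T) 1%:M *m block_mx a%:M r 0 (sch a r D).
  rewrite mulmx_block /blk /sch !mul1mx ?mul0mx ?mulmx0 ?addr0 ?add0r.
  rewrite -scalemxAl mul_mx_scalar scalerA mulVf // scale1r.
  by rewrite -scalemxAl addrC subrK.
by rewrite det_mulmx det_lblock det_ublock !det1 det_scalar1 !mul1r.
Qed.

Lemma sym_sch n a (r : 'M[R]_(1, n)) D : D^T = D -> (sch a r D)^T = sch a r D.
Proof. by move=> HD; rewrite /sch linearB /= linearZ /= trmx_mul trmxK HD. Qed.

Lemma blk_decomp n (A : 'M[R]_(1 + n)) : A^T = A ->
  exists a r D, A = blk a r D /\ D^T = D.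
Proof.
move=> HA; exists (ulsubmx A 0 0), (ursubmx A), (drsubmx A); split.
  rewrite /blk -mx11_scalar trmx_ursub HA; exact/esym/submxK.
by rewrite trmx_drsub HA.
Qed.


Lemma rv_ext0 n (u : 'M[R]_(1, n)) : (forall y : 'cV_n, (u *m y) 0 0 = 0) -> u = 0.
Proof.
move=> H; apply: mx_ext0 => y; rewrite [u *m y]mx11_scalar H.
by apply/matrixP => i j; rewrite !mxE mul0rn.
Qed.

Lemma colmx_neq0 n t (y : 'cV[R]_n) : y != 0 -> col_mx t%:M y != 0.
Proof. by move=> y0; rewrite col_mx_eq0 negb_and y0 orbT. Qed.

Lemma pd_blk n a (r : 'M[R]_(1, n)) D : D^T = D -> pd (blk a r D) ->
  0 < a /\ pd (sch a r D).
Proof.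
move=> sD [_ pA].
have a0 : 0 < a.
  have := pA (col_mx 1%:M (0 : 'cV_n)); rewrite qf_blk mulmx0 /qf trmx0 !mul0mx !mxE.
  rewrite expr1n mulr1 mulr0 !addr0; apply; rewrite col_mx_eq0 negb_and.
  apply/orP; left; apply/negP => /eqP/matrixP/(_ 0 0)/eqP.
  by rewrite !mxE /= mulr1n oner_eq0.
split => //; split; first exact: sym_sch.
move=> y y0; rewrite -qf_blk_opt ?lt0r_neq0 //; apply: pA; exact: colmx_neq0.
Qed.

Lemma psd_blk n s (u : 'M[R]_(1, n)) V : psd (blk s u V) ->
  0 <= s /\ (s = 0 -> u = 0).
Proof.
move=> [_ pS].
have s0 : 0 <= s.
  have := pS (col_mx 1%:M (0 : 'cV_n)); rewrite qf_blk mulmx0 /qf trmx0 !mul0mx !mxE.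
  by rewrite expr1n mulr1 mulr0 !addr0.
split => // s00; apply: rv_ext0 => y.
apply/eqP; apply/negP => /negP mu0.
have := pS (col_mx (- ((qf V y + 1) / (2 * (u *m y) 0 0)))%:M y).
rewrite qf_blk s00 mul0r add0r.
have -> : 2 * - ((qf V y + 1) / (2 * (u *m y) 0 0)) * (u *m y) 0 0 = - (qf V y + 1).
  by field.
by rewrite opprD addrAC addNr add0r ler0N1.
Qed.

Lemma blk_add n a r D b u V :
  blk a r D + blk b u V = blk (a + b) (r + u) (D + V) :> 'M[R]_(1 + n).
Proof. by rewrite /blk add_block_mx raddfD /= linearD. Qed.

Lemma det_mono n : forall (A S : 'M[R]_n), pd A -> psd S ->
  0 < \det A /\ \det A <= \det (A + S) /\ (\det (A + S) = \det A -> S = 0).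
Proof.
elim: n => [|n IH] A S [sA pA] [sS pS].
  rewrite !det_mx00; split => //; split => // _; apply/matrixP => [[]] //.
have [a [r [D [EA sD]]]] := blk_decomp sA.
have [s [u [V [ES sV]]]] := blk_decomp sS.
have pA' : pd (blk a r D) by rewrite -EA.
have pS' : psd (blk s u V) by rewrite -ES.
have [a0 pdS] := pd_blk sD pA'.
have [s0 u0] := psd_blk pS'.
have as0 : 0 < a + s by rewrite ltr_wpDr.
rewrite EA ES blk_add.
set P := sch (a + s) (r + u) (D + V) - sch a r D.
have psdP : psd P.
  split; first by rewrite /P linearB /= !sym_sch // linearD /= sD sV.
  move=> y; rewrite /P qfB subr_ge0 -[qf (sch (a + s) _ _) y]qf_blk_opt ?lt0r_neq0 // -blk_add qfD.
  apply: le_trans (qf_blk_ge _ _ (- (((r + u) *m y) 0 0 / (a + s))) _ a0) _; rewrite lerDl.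
  by case: pS' => _; apply.
have [d0 [dle deq]] := IH _ P pdS psdP.
have EP : sch a r D + P = sch (a + s) (r + u) (D + V) by rewrite /P addrC subrK.
rewrite EP in dle deq.
rewrite !det_blk ?lt0r_neq0 //; split; first exact: mulr_gt0.
split; first by apply: ler_pM => //; [exact: ltW | exact: ltW | rewrite lerDl].
move=> Heq.
have [s00 dd] : s = 0 /\ \det (sch (a + s) (r + u) (D + V)) = \det (sch a r D).
  suff s00 : s = 0.
    by split=> //; move: Heq; rewrite s00 addr0 => /mulfI; apply; rewrite lt0r_neq0.
  apply/eqP; rewrite eq_le s0 andbT.
  have : (a + s) * \det (sch (a + s) (r + u) (D + V)) <= a * \det (sch a r D).
    by rewrite Heq.
  nra.
have P0 := deq dd.
have u00 := u0 s00.
have E (x y z : 'M[R]_n) : x + y - z - (x - z) = y.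
  by rewrite opprB addrA subrK addrAC subrr add0r.
move: P0; rewrite /P s00 u00 addr0 addr0 /sch E => V0.
by rewrite V0 /blk raddf0 trmx0; exact: (@block_mx0 _ 1 n 1 n).
Qed.


Lemma blkE n (A : 'M[R]_(1 + n)) : A^T = A ->
  A = blk (ulsubmx A 0 0) (ursubmx A) (drsubmx A).
Proof. by move=> HA; rewrite /blk -mx11_scalar trmx_ursub HA; exact/esym/submxK. Qed.

Lemma sym_drsub n (A : 'M[R]_(1 + n)) : A^T = A -> (drsubmx A)^T = drsubmx A.
Proof. by move=> HA; rewrite trmx_drsub HA. Qed.

Lemma blk_scale n c a (r : 'M[R]_(1, n)) D :
  c *: blk a r D = blk (c * a) (c *: r) (c *: D).
Proof.
rewrite /blk scale_block_mx -scale_scalar_mx; congr block_mx.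
by apply/matrixP => i j; rewrite !mxE.
Qed.

Lemma blk0 n : blk 0 0 0 = 0 :> 'M[R]_(1 + n).
Proof. by rewrite /blk raddf0 trmx0; exact: (@block_mx0 _ 1 n 1 n). Qed.

Lemma blk_sum n (I : finType) (a : I -> R) (r : I -> 'M[R]_(1, n)) D :
  \sum_i blk (a i) (r i) (D i) = blk (\sum_i a i) (\sum_i r i) (\sum_i D i).
Proof.
elim: (index_enum I) => [|i s IH]; first by rewrite !big_nil blk0.
by rewrite !big_cons IH blk_add.
Qed.

Lemma sym_wsum n (I : finType) (w : I -> R) (B : I -> 'M[R]_n) :
  (forall i, (B i)^T = B i) -> (\sum_i w i *: B i)^T = \sum_i w i *: B i.
Proof.
move=> H; rewrite raddf_sum; apply: eq_bigr => i _; rewrite -{2}(H i).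
by apply/matrixP => k l; rewrite !mxE.
Qed.

Lemma qf_wsum n (I : finType) (w : I -> R) (B : I -> 'M[R]_n) y :
  qf (\sum_i w i *: B i) y = \sum_i w i * qf (B i) y.
Proof. by rewrite qf_sum; apply: eq_bigr => i _; rewrite qfZ. Qed.


Lemma sylvester n p (X : 'M[R]_(n, p)) (Y : 'M[R]_(p, n)) :
  \det (1%:M + X *m Y) = \det (1%:M + Y *m X).
Proof.
have E1 : block_mx 1%:M X (- Y) 1%:M =
    block_mx 1%:M 0 (- Y) 1%:M *m block_mx 1%:M X 0 (1%:M + Y *m X).
  rewrite mulmx_block ?mul1mx ?mul0mx ?mulmx0 ?addr0 ?add0r ?mulmx1 ?mulNmx.
  by rewrite addrCA addNr addr0.
have E2 : block_mx 1%:M X (- Y) 1%:M =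
    block_mx 1%:M X 0 1%:M *m block_mx (1%:M + X *m Y) 0 (- Y) 1%:M.
  rewrite mulmx_block ?mul1mx ?mul0mx ?mulmx0 ?addr0 ?add0r ?mulmx1 ?mulmxN.
  by rewrite addrK.
have := congr1 determinant E1; rewrite E2 !det_mulmx det_lblock det_ublock.
by rewrite det_lblock det_ublock !det1 !mul1r !mulr1.
Qed.

Lemma pd_det n (A : 'M[R]_n) : pd A -> 0 < \det A.
Proof.
move=> pA; have ps0 : psd (0 : 'M[R]_n).
  by split; [rewrite trmx0 | move=> x; rewrite /qf mulmx0 mul0mx mxE].
by case: (det_mono pA ps0).
Qed.

Lemma pd1G n (G : 'M[R]_n) : psd G -> pd (1%:M + G).
Proof.
move=> [sG pG]; split; first by rewrite linearD /= trmx1 sG.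
move=> x x0; rewrite qfD qf1; apply: ltr_wpDr; first exact: pG.
rewrite lt_def nrm2_ge0 andbT; apply/negP => /eqP/nrm2_eq0/eqP; exact/negP.
Qed.


Lemma qf_sq n (G : 'M[R]_n) w : G^T = G -> qf (G *m G) w = nrm2 (G *m w).
Proof. by move=> sG; rewrite -{2}sG qf_gram sG. Qed.

Lemma two_block n p (G : 'M[R]_n) (Z : 'M[R]_(n, p)) (c : R) : psd G -> 0 < c ->
  \det (1%:M + G + c *: (Z *m Z^T)) <=
    \det (1%:M + G) * \det (1%:M + c *: (Z *m Z^T)) /\
  (\det (1%:M + G + c *: (Z *m Z^T)) =
    \det (1%:M + G) * \det (1%:M + c *: (Z *m Z^T)) <-> G *m Z = 0).
Proof.
move=> psG c0; have [sG pG] := psG.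
set M := 1%:M + G.
have pM : pd M := pd1G psG.
have dM : 0 < \det M := pd_det pM.
have uM : M \in unitmx by rewrite unitmxE unitfE lt0r_neq0.
set Mi := invmx M.
have MMi : M *m Mi = 1%:M by rewrite mulmxV.
have MiM : Mi *m M = 1%:M by rewrite mulVmx.
have sM : M^T = M by case: pM.
have sMi : Mi^T = Mi by rewrite /Mi trmx_inv sM.
have GM : G *m M = M *m G by rewrite /M mulmxDr mulmxDl mulmx1 mul1mx.
have GMi : Mi *m G = G *m Mi.
  by rewrite -[Mi *m G]mulmx1 -MMi !mulmxA -[Mi *m G *m M]mulmxA GM mulmxA MiM mul1mx.
have E1 : 1%:M + G + c *: (Z *m Z^T) = M *m (1%:M + (Mi *m (c *: Z)) *m Z^T).
  by rewrite mulmxDr mulmx1 !mulmxA MMi mul1mx scalemxAl.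
have D1 : \det (1%:M + G + c *: (Z *m Z^T)) =
    \det M * \det (1%:M + c *: (Z^T *m Mi *m Z)).
  by rewrite E1 det_mulmx sylvester -!scalemxAr mulmxA.
have D2 : \det (1%:M + c *: (Z *m Z^T)) = \det (1%:M + c *: (Z^T *m Z)).
  by rewrite scalemxAl sylvester -scalemxAr.
set Aq := 1%:M + c *: (Z^T *m Mi *m Z).
set Sq := c *: (Z^T *m (Mi *m G) *m Z).
have AS : Aq + Sq = 1%:M + c *: (Z^T *m Z).
  rewrite /Aq /Sq -addrA -scalerDr -mulmxDl -mulmxDr.
  by rewrite -{1}[Mi]mulmx1 -mulmxDr MiM mulmx1.
have qfMi : forall v, qf Mi v = qf M (Mi *m v).
  move=> v; rewrite -qf_mul sMi -mulmxA MMi mulmx1 //.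
have pAq : pd Aq.
  split.
    rewrite /Aq linearD /= trmx1 linearZ /= !trmx_mul trmxK sMi mulmxA //.
  move=> x x0; rewrite qfD qf1 qfZ qf_mul qfMi; apply: ltr_pwDl.
    by rewrite lt_def nrm2_ge0 andbT; apply/negP => /eqP/nrm2_eq0/eqP; exact/negP.
  apply: mulr_ge0; first exact: ltW.
  have [->|w0] := eqVneq (Mi *m (Z *m x)) 0; first by rewrite /qf mulmx0 mxE.
  exact/ltW/(proj2 pM).
have qfS : forall x, qf Sq x = c * (qf G (Mi *m (Z *m x)) + nrm2 (G *m (Mi *m (Z *m x)))).
  move=> x; rewrite qfZ qf_mul; congr (_ * _).
  set w := Mi *m (Z *m x).
  have -> : Z *m x = M *m w by rewrite /w mulmxA MMi mul1mx.
  rewrite -qf_mul sM mulmxA MMi mul1mx /M mulmxDr mulmx1 qfD qf_sq //.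
have pSq : psd Sq.
  split.
    rewrite /Sq linearZ /= !trmx_mul trmxK sMi sG.
    by rewrite -GMi !mulmxA.
  move=> x; rewrite qfS; apply: mulr_ge0; first exact: ltW.
  by apply: addr_ge0; [exact: pG | exact: nrm2_ge0].
have [_ [mle meq]] := det_mono pAq pSq.
rewrite D1 D2 -AS; split; first by rewrite ler_pM2l.
split.
  move/(mulfI (lt0r_neq0 dM))/esym/meq => S0.
  have GW : G *m (Mi *m Z) = 0.
    apply: mx_ext0 => x; apply: nrm2_eq0; rewrite -!mulmxA.
    have := qfS x; rewrite S0 /qf mulmx0 mul0mx mxE => /esym/eqP.
    rewrite mulf_eq0 (negbTE (lt0r_neq0 c0)) /= paddr_eq0 ?nrm2_ge0 //.
      by case/andP => _ /eqP.
    exact: pG.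
  have -> : Z = M *m (Mi *m Z) by rewrite mulmxA MMi mul1mx.
  by rewrite mulmxA GM -mulmxA GW mulmx0.
move=> GZ0; congr (_ * _); congr determinant.
by rewrite /Sq -!mulmxA GZ0 !mulmx0 scaler0 addr0 /Aq mulmxA.
Qed.


Lemma psd_gram n p (Z : 'M[R]_(n, p)) : psd (Z *m Z^T).
Proof. by split; [rewrite trmx_mul trmxK | move=> x; rewrite qf_gram nrm2_ge0]. Qed.

Lemma psd_scale n c (A : 'M[R]_n) : 0 <= c -> psd A -> psd (c *: A).
Proof.
move=> c0 [sA pA]; split; first by rewrite -{2}sA; apply/matrixP => i j; rewrite !mxE.
by move=> x; rewrite qfZ mulr_ge0.
Qed.

Lemma psd_add n (A B : 'M[R]_n) : psd A -> psd B -> psd (A + B).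
Proof.
move=> [sA pA] [sB pB]; split; first by rewrite linearD /= sA sB.
by move=> x; rewrite qfD addr_ge0.
Qed.

Lemma psd_sum n (I : finType) (P : pred I) (F : I -> 'M[R]_n) :
  (forall i, psd (F i)) -> psd (\sum_(i | P i) F i).
Proof.
move=> H; apply: big_ind => //; last by move=> ? ?; apply: psd_add.
by split; [rewrite trmx0 | move=> x; rewrite /qf mulmx0 mul0mx mxE].
Qed.

Lemma sum_gram_zero n q k (m : 'I_k -> nat) (Z : forall j, 'M[R]_(n, m j))
    (P : pred 'I_k) (Y : 'M[R]_(n, q)) :
  (\sum_(j | P j) Z j *m (Z j)^T) *m Y = 0 <-> (forall j, P j -> (Z j)^T *m Y = 0).
Proof.
split; last first.
  by move=> H; rewrite mulmx_suml big1 // => j Pj; rewrite -mulmxA H // mulmx0.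
move=> H0 j Pj; apply: mx_ext0 => x.
have : qf (\sum_(j | P j) Z j *m (Z j)^T) (Y *m x) = 0.
  by rewrite /qf !mulmxA -[_ *m _ *m Y]mulmxA H0 mulmx0 mul0mx mxE.
rewrite /qf mulmx_sumr mulmx_suml summxE => /eqP.
rewrite psumr_eq0 => [/allP/(_ j (mem_index_enum _))|i _].
  rewrite Pj /= => /eqP H; apply: nrm2_eq0; rewrite -mulmxA -qf_gram; exact: H.
by have := qf_gram (Z i) (Y *m x); rewrite /qf => ->; exact: nrm2_ge0.
Qed.


Lemma det_prefix n k (m : 'I_k -> nat) (Z : forall j, 'M[R]_(n, m j)) (c : R) :
  0 < c -> forall l : nat,
  \det (1%:M + c *: \sum_(j < k | (j < l)%N) Z j *m (Z j)^T) <=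
    \prod_(j < k | (j < l)%N) \det (1%:M + c *: (Z j *m (Z j)^T)) /\
  (\det (1%:M + c *: \sum_(j < k | (j < l)%N) Z j *m (Z j)^T) =
    \prod_(j < k | (j < l)%N) \det (1%:M + c *: (Z j *m (Z j)^T)) <->
   forall j1 j2 : 'I_k, (j1 < j2)%N -> (j2 < l)%N -> (Z j1)^T *m Z j2 = 0).
Proof.
move=> c0; elim=> [|l [IHle IHeq]].
  rewrite !big_pred0 // scaler0 addr0 det1; split => // ; split => // _ j1 j2.
have [kl|lk] := leqP k l.
  have E : forall j : 'I_k, (j < l.+1)%N = (j < l)%N.
    move=> j; have jl : (j < l)%N := leq_trans (ltn_ord j) kl.
    by rewrite jl ltnS ltnW.
  rewrite (eq_bigl _ _ E) [X in _ <= X](eq_bigl _ _ E) [X in _ = X](eq_bigl _ _ E).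
  split => //; rewrite IHeq; split => H j1 j2 j12 j2l; apply: H => //.
    by rewrite -E.
  by rewrite E.
set jl := Ordinal lk.
have E : forall j : 'I_k, ((j < l.+1)%N && (j != jl)) = (j < l)%N.
  move=> j; rewrite ltnS leq_eqVlt -val_eqE /=.
  by case: ltngtP => // ->; rewrite ltnn.
have jlP : (jl < l.+1)%N by rewrite /= ltnS.
rewrite (bigD1 jl jlP) (bigD1 jl jlP) /= (eq_bigl _ _ E) [X in _ * X](eq_bigl _ _ E).
set S := \sum_(j < k | (j < l)%N) Z j *m (Z j)^T.
set e := \det (1%:M + c *: (Z jl *m (Z jl)^T)).
set P := \prod_(j < k | (j < l)%N) _.
have psG : psd (c *: S) by apply: psd_scale (ltW c0) _; apply: psd_sum => j; apply: psd_gram.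
have ER : 1%:M + c *: (Z jl *m (Z jl)^T + S) = 1%:M + c *: S + c *: (Z jl *m (Z jl)^T).
  by rewrite scalerDr addrA [_ + c *: S]addrC addrA [c *: S + _]addrC.
rewrite ER.
have [Tle Teq] := two_block (Z jl) psG c0.
have e0 : 0 < e by apply: pd_det; apply: pd1G; apply: psd_scale (ltW c0) _; apply: psd_gram.
have d0 : 0 < \det (1%:M + c *: S) by apply: pd_det; apply: pd1G.
split.
  apply: le_trans Tle _; rewrite [e * P]mulrC ler_pM2r //.
have GZ : c *: S *m Z jl = 0 <-> forall j : 'I_k, (j < l)%N -> (Z j)^T *m Z jl = 0.
  rewrite -scalemxAl -(@sum_gram_zero _ _ _ _ Z (fun j : 'I_k => (j < l)%N) (Z jl)).
  split; last by move=> ->; rewrite scaler0.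
  by move/eqP; rewrite scaler_eq0 (negbTE (lt0r_neq0 c0)) /= => /eqP.
split.
  move=> Heq.
  have h1 : \det (1%:M + c *: S) * e <= P * e by rewrite ler_pM2r.
  have [ea eb] : \det (1%:M + c *: S + c *: (Z jl *m (Z jl)^T)) =
        \det (1%:M + c *: S) * e /\ \det (1%:M + c *: S) = P.
    suff h : \det (1%:M + c *: S) = P by split => //; move: Heq; rewrite h mulrC.
    apply: (mulIf (lt0r_neq0 e0)); apply/eqP; rewrite eq_le h1 /=.
    by rewrite -[X in X <= _]mulrC -Heq.
  have h2 := (proj1 GZ) ((proj1 Teq) ea).
  have h3 := (proj1 IHeq) eb.
  move=> j1 j2 j12; rewrite ltnS leq_eqVlt => /orP [/eqP j2l|j2l]; last exact: h3.
  have -> : j2 = jl by apply: val_inj.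
  by apply: h2; rewrite -j2l.
move=> H.
have eb : \det (1%:M + c *: S) = P.
  by apply/(proj2 IHeq) => j1 j2 j12 j2l; apply: H => //; rewrite ltnW.
have ea : \det (1%:M + c *: S + c *: (Z jl *m (Z jl)^T)) = \det (1%:M + c *: S) * e.
  apply/(proj2 Teq)/(proj2 GZ) => j jl'; apply: H => //.
by rewrite ea eb mulrC.
Qed.

End Core.

Section Conc.
Variable R : realType.

Lemma ln_le_sub1 (x : R) : 0 < x -> ln x <= x - 1 /\ (ln x = x - 1 -> x = 1).
Proof.
move=> x0; have Ex : expR (ln x) = x by rewrite lnK // posrE.
split; first by rewrite lerBrDl -[X in _ <= X]Ex expR_ge1Dx.
move=> H; have [l0|l0] := eqVneq (ln x) 0.
  by rewrite -Ex l0 expR0.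
have := expR_gt1Dx l0; rewrite Ex H; lra.
Qed.

Lemma pos_sum (I : finType) (f : I -> R) (i0 : I) :
  (forall i, 0 < f i) -> 0 < \sum_i f i.
Proof.
move=> H; rewrite (bigD1 i0) //=; apply: ltr_wpDr; last exact: H.
by apply: sumr_ge0 => i _; apply: ltW.
Qed.

Lemma jensen_ln (I : finType) (w a : I -> R) :
  (forall i, 0 < w i) -> \sum_i w i = 1 -> (forall i, 0 < a i) ->
  \sum_i w i * ln (a i) <= ln (\sum_i w i * a i) /\
  (\sum_i w i * ln (a i) = ln (\sum_i w i * a i) -> forall i, a i = \sum_j w j * a j).
Proof.
move=> w0 w1 a0.
have [i0 _] : exists i0 : I, true.
  case: (pickP (fun _ : I => true)) => [i ?|H]; first by exists i.
  by move: w1; rewrite big_pred0 // => /eqP; rewrite eq_sym oner_eq0.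
set m := \sum_i w i * a i.
have m0 : 0 < m by apply: (pos_sum i0) => i; rewrite mulr_gt0.
have E : \sum_i w i * ln (a i) - ln m = \sum_i w i * ln (a i / m).
  rewrite -[X in _ - X]mul1r -w1 mulr_suml -sumrB; apply: eq_bigr => i _.
  by rewrite -mulrBr ln_div // posrE.
have F : \sum_i w i * (a i / m - 1) = 0.
  rewrite (eq_bigr (fun i => (w i * a i) / m - w i)); last first.
    by move=> i _; rewrite mulrBr mulr1 mulrA.
  by rewrite sumrB -mulr_suml w1 divff ?subrr // lt0r_neq0.
have G : forall i, 0 <= w i * (a i / m - 1) - w i * ln (a i / m).
  move=> i; rewrite -mulrBr; apply: mulr_ge0; first exact: ltW.
  by rewrite subr_ge0; case: (ln_le_sub1 (divr_gt0 (a0 i) m0)).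
have H : \sum_i w i * ln (a i) - ln m = - \sum_i (w i * (a i / m - 1) - w i * ln (a i / m)).
  by rewrite E sumrB F sub0r opprK.
split.
  rewrite -subr_le0 H oppr_le0; apply: sumr_ge0 => i _; exact: G.
move=> Heq i.
have : \sum_i (w i * (a i / m - 1) - w i * ln (a i / m)) = 0.
  by rewrite -[LHS]opprK -H Heq subrr oppr0.
move/eqP; rewrite psumr_eq0 => [/allP/(_ i (mem_index_enum _))|j _]; last exact: G.
rewrite -mulrBr mulf_eq0 (negbTE (lt0r_neq0 (w0 i))) /= subr_eq0 => /eqP Hl.
have := (ln_le_sub1 (divr_gt0 (a0 i) m0)).2 (esym Hl).
by move/(congr1 (fun x => x * m)); rewrite mul1r divfK // lt0r_neq0.
Qed.

Lemma var0 (I : finType) (w x : I -> R) :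
  (forall i, 0 < w i) -> \sum_i w i = 1 ->
  (\sum_i w i * x i) ^+ 2 = \sum_i w i * x i ^+ 2 ->
  forall i, x i = \sum_j w j * x j.
Proof.
move=> w0 w1 H i; set m := \sum_j w j * x j in H *.
have E : \sum_j w j * (x j - m) ^+ 2 = 0.
  rewrite (eq_bigr (fun j => w j * x j ^+ 2 - 2 * m * (w j * x j) + m ^+ 2 * w j)).
    by rewrite big_split sumrB /= -!mulr_sumr -/m -H w1; ring.
  by move=> j _; ring.
move/eqP: E; rewrite psumr_eq0 => [/allP/(_ i (mem_index_enum _))|j _]; last first.
  by rewrite mulr_ge0 ?sqr_ge0 ?ltW.
rewrite mulf_eq0 (negbTE (lt0r_neq0 (w0 i))) /= sqrf_eq0 subr_eq0 => /eqP //.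
Qed.


Lemma nonempty_w (I : finType) (w : I -> R) : \sum_i w i = 1 -> exists i0 : I, true.
Proof.
case: (pickP (fun _ : I => true)) => [i ?|H]; first by exists i.
by rewrite big_pred0 // => /eqP; rewrite eq_sym oner_eq0.
Qed.

Lemma logdet_concave n : forall (I : finType) (w : I -> R) (A : I -> 'M[R]_n),
  (forall i, 0 < w i) -> \sum_i w i = 1 -> (forall i, pd (A i)) ->
  \sum_i w i * ln (\det (A i)) <= ln (\det (\sum_i w i *: A i)) /\
  (\sum_i w i * ln (\det (A i)) = ln (\det (\sum_i w i *: A i)) ->
     forall i j, A i = A j).
Proof.
elim: n => [|n IH] I w A w0 w1 pA.
  rewrite !det_mx00 ln1 (eq_bigr (fun=> 0)) => [|i _]; last by rewrite det_mx00 ln1 mulr0.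
  by rewrite big1 //; split => // _ i j; apply/matrixP => [[]].
have [i0 _] := nonempty_w w1.
pose a i := ulsubmx (A i : 'M[R]_(1 + n)) 0 0; pose r i := ursubmx (A i : 'M[R]_(1 + n)); pose D i := drsubmx (A i : 'M[R]_(1 + n)).
have EA : forall i, A i = blk (a i) (r i) (D i) := fun i => blkE (proj1 (pA i)).
have sD : forall i, (D i)^T = D i := fun i => sym_drsub (proj1 (pA i)).
have pdi : forall i, 0 < a i /\ pd (sch (a i) (r i) (D i)).
  by move=> i; apply: pd_blk (sD i) _; rewrite -EA.
set ab := \sum_i w i * a i; set rb := \sum_i w i *: r i; set Db := \sum_i w i *: D i.
have Esum : \sum_i w i *: A i = blk ab rb Db.
  rewrite (eq_bigr (fun i => blk (w i * a i) (w i *: r i) (w i *: D i))).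
    by rewrite blk_sum.
  by move=> i _; rewrite EA blk_scale.
have ab0 : 0 < ab by apply: (pos_sum i0) => i; rewrite mulr_gt0 // (proj1 (pdi i)).
set Sb := \sum_i w i *: sch (a i) (r i) (D i).
set P := sch ab rb Db - Sb.
have pdSb : pd Sb.
  split; first by apply: sym_wsum => i; exact: (proj1 (proj2 (pdi i))).
  move=> y y0; rewrite qf_wsum; apply: (pos_sum i0) => i.
  by rewrite mulr_gt0 //; apply: (proj2 (proj2 (pdi i))).
have psdP : psd P.
  split.
    rewrite /P linearB /= sym_sch; last exact: sym_wsum.
    by rewrite sym_wsum // => i; exact: (proj1 (proj2 (pdi i))).
  move=> y; rewrite /P qfB subr_ge0 -[qf (sch ab _ _) y]qf_blk_opt ?lt0r_neq0 //.
  rewrite -Esum qf_wsum /Sb qf_wsum; apply: ler_sum => i _.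
  apply: ler_wpM2l; first exact: ltW.
  by rewrite EA; apply: qf_blk_ge (proj1 (pdi i)).
have [IHle IHeq] := IH I w (fun i => sch (a i) (r i) (D i)) w0 w1 (fun i => (proj2 (pdi i))).
have [dSb0 [dle deq]] := det_mono pdSb psdP.
have ESP : Sb + P = sch ab rb Db by rewrite /P addrC subrK.
rewrite ESP in dle deq.
have [Jle Jeq] := jensen_ln w0 w1 (fun i => (proj1 (pdi i))).
have dsch0 : forall i, 0 < \det (sch (a i) (r i) (D i)).
  by move=> i; apply: pd_det; exact: (proj2 (pdi i)).
have lnA : forall i, ln (\det (A i)) = ln (a i) + ln (\det (sch (a i) (r i) (D i))).
  move=> i; rewrite EA det_blk ?lt0r_neq0 ?(proj1 (pdi i)) // lnM // posrE //.
  exact: (proj1 (pdi i)).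
have dS0 : 0 < \det (sch ab rb Db) by apply: lt_le_trans dle.
have lnS : ln (\det (\sum_i w i *: A i)) = ln ab + ln (\det (sch ab rb Db)).
  by rewrite Esum det_blk ?lt0r_neq0 // lnM // posrE.
have lnle : ln (\det Sb) <= ln (\det (sch ab rb Db)) by rewrite ler_ln // posrE.
have Esplit : \sum_i w i * ln (\det (A i)) =
   \sum_i w i * ln (a i) + \sum_i w i * ln (\det (sch (a i) (r i) (D i))).
  by rewrite -big_split; apply: eq_bigr => i _; rewrite lnA mulrDr.
rewrite Esplit lnS; split; first lra.
move=> Heq.
have e1 : \sum_i w i * ln (a i) = ln ab by lra.
have e2 : \sum_i w i * ln (\det (sch (a i) (r i) (D i))) = ln (\det Sb) by lra.
have e3 : \det Sb = \det (sch ab rb Db).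
  by apply: ln_inj; rewrite ?posrE //; lra.
have aeq := Jeq e1.
have scheq := IHeq e2.
have P0 := deq (esym e3).
have req : forall i, r i = rb.
  have rby : forall y : 'cV[R]_n, (rb *m y) 0 0 = \sum_i w i * (r i *m y) 0 0.
    move=> y; rewrite /rb mulmx_suml summxE; apply: eq_bigr => i _.
    by rewrite -scalemxAl mxE.
  move=> i; apply/subr0_eq; apply: rv_ext0 => y.
  have E2 (u v : 'M[R]_1) : (u - v) 0 0 = u 0 0 - v 0 0 by rewrite !mxE.
  rewrite mulmxBl E2; apply/eqP; rewrite subr_eq0; apply/eqP.
  have HP : qf (sch ab rb Db) y = qf Sb y.
    by move: P0; rewrite /P => /eqP; rewrite subr_eq0 => /eqP ->.
  have HS : qf Sb y = \sum_j w j * qf (D j) y - ab^-1 * \sum_j w j * (r j *m y) 0 0 ^+ 2.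
    rewrite /Sb qf_wsum mulr_sumr -sumrB; apply: eq_bigr => j _.
    by rewrite qf_sch aeq; ring.
  have HD : qf Db y = \sum_j w j * qf (D j) y by rewrite /Db qf_wsum.
  move: HP; rewrite qf_sch HS HD => /eqP; rewrite (inj_eq (addrI _)) eqr_opp.
  rewrite (inj_eq (mulrI _)) ?unitfE ?invr_eq0 ?lt0r_neq0 // => /eqP H2.
  rewrite rby; apply: (var0 (x := fun j => (r j *m y) 0 0) w0 w1); by rewrite -rby.
have Deq : forall i, D i = sch (a i) (r i) (D i) + ab^-1 *: (rb^T *m rb).
  by move=> i; rewrite /sch aeq req subrK.
move=> i j; by rewrite (EA i) (EA j) (aeq i) (aeq j) (req i) (req j) (Deq i) (Deq j) (scheq i j).
Qed.

End Conc.

End LogDetAux.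
Import LogDetAux.

Lemma ln_prod (R : realType) (I : finType) (f : I -> R) :
  (forall i, 0 < f i) -> ln (\prod_i f i) = \sum_i ln (f i).
Proof.
move=> fp; elim: (index_enum I) => [|i s IH]; first by rewrite !big_nil ln1.
rewrite !big_cons lnM ?IH // posrE //; apply: prodr_gt0 => j _; exact: fp.
Qed.

Theorem mainTheorem2 (R : realType) (n k : nat) (m : 'I_k -> nat)
  (Z : forall j : 'I_k, 'M[R]_(n, m j)) (eps : R) :
  (1 <= k)%N -> (forall j, (1 <= m j)%N) -> 0 < eps ->
  let M := (\sum_(j < k) m j)%N in
  let Zc : 'M[R]_(n, M) := \mxrow_(j < k) Z j in
  let lhs := \sum_(j < k) ((m j)%:R / 2) * logdet_rate eps (Z j) in
  let mid := (M%:R / 2) * logdet_rate eps Zc in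
  let rhs := \sum_(j < k) (M%:R / 2) *
               ln (\det (1%:M + (n%:R / (M%:R * eps ^+ 2)) *: (Z j *m (Z j)^T))) in
  [/\ lhs <= mid, mid <= rhs,
      lhs = mid <-> (forall i j : 'I_k,
          (m i)%:R^-1 *: (Z i *m (Z i)^T) = (m j)%:R^-1 *: (Z j *m (Z j)^T)) &
      mid = rhs <-> (forall j1 j2 : 'I_k, (j1 < j2)%N -> (Z j1)^T *m Z j2 = 0)].
Proof.
move=> hk hm heps M Zc lhs mid rhs.
case: (posnP n) => [n0|npos].
  subst n.
  have L0 : forall A : 'M[R]_0, ln (\det A) = 0 by move=> A; rewrite det_mx00 ln1.
  have l0 : lhs = 0 by rewrite /lhs big1 // => j _; rewrite /logdet_rate L0 mulr0.
  have m0 : mid = 0 by rewrite /mid /logdet_rate L0 mulr0.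
  have r0 : rhs = 0 by rewrite /rhs big1 // => j _; rewrite L0 mulr0.
  rewrite l0 m0 r0; split => //; split => // _.
    by move=> i j; apply/matrixP => [[]].
  by move=> j1 j2 _; apply/matrixP => a b; rewrite !mxE big_ord0.
pose j0 : 'I_k := Ordinal hk.
have Mpos : (0 < M)%N.
  by rewrite /M (bigD1 j0) //=; apply: leq_trans (hm j0) (leq_addr _ _).
have MR : 0 < (M%:R : R) by rewrite ltr0n.
have mR : forall j, 0 < ((m j)%:R : R) by move=> j; rewrite ltr0n.
have nR : 0 < (n%:R : R) by rewrite ltr0n.
have e2 : 0 < eps ^+ 2 by rewrite exprn_gt0.
have ZcE : Zc *m Zc^T = \sum_j Z j *m (Z j)^T by rewrite /Zc tr_mxrow mul_mxrow_mxcol.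
pose w j : R := (m j)%:R / M%:R.
have w0 : forall j, 0 < w j by move=> j; rewrite divr_gt0.
have w1 : \sum_j w j = 1.
  by rewrite /w -mulr_suml -natr_sum divff // lt0r_neq0.
pose A j := 1%:M + (n%:R / ((m j)%:R * eps ^+ 2)) *: (Z j *m (Z j)^T).
have pdA : forall j, pd (A j).
  move=> j; apply: pd1G; apply: psd_scale; last exact: psd_gram.
  by apply: ltW; rewrite divr_gt0 // mulr_gt0.
have EA : \sum_j w j *: A j = 1%:M + (n%:R / (M%:R * eps ^+ 2)) *: (Zc *m Zc^T).
  rewrite ZcE scaler_sumr.
  under eq_bigr do rewrite /A scalerDr scalerA.
  rewrite big_split /= -scaler_suml w1 scale1r; congr (_ + _).
  apply: eq_bigr => j _; congr (_ *: _); rewrite /w.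
  by field; rewrite !lt0r_neq0.
have Elhs : lhs = (M%:R / 2) * \sum_j w j * ln (\det (A j)).
  rewrite /lhs mulr_sumr; apply: eq_bigr => j _; rewrite /logdet_rate /w.
  by rewrite [RHS]mulrA; congr (_ * _); field; rewrite lt0r_neq0.
have Emid : mid = (M%:R / 2) * ln (\det (\sum_j w j *: A j)) by rewrite EA.
have [Cle Ceq] := logdet_concave w0 w1 pdA.
have h2 : 0 < (M%:R : R) / 2 by rewrite divr_gt0.
set c2 := n%:R / (M%:R * eps ^+ 2).
have c20 : 0 < c2 by rewrite divr_gt0 // mulr_gt0.
have [Ple Peq] := det_prefix Z c20 k.
have Ek : forall j : 'I_k, (j < k)%N = true by move=> j; rewrite ltn_ord.
rewrite (eq_bigl _ _ Ek) [X in _ <= X](eq_bigl _ _ Ek) [X in _ = X](eq_bigl _ _ Ek) in Ple Peq.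
have Emid2 : mid = (M%:R / 2) * ln (\det (1%:M + c2 *: \sum_j Z j *m (Z j)^T)).
  by rewrite /mid /logdet_rate ZcE.
have dpos : forall j, 0 < \det (1%:M + c2 *: (Z j *m (Z j)^T)).
  move=> j; apply: pd_det; apply: pd1G; apply: psd_scale (ltW c20) _; exact: psd_gram.
have Erhs : rhs = (M%:R / 2) * ln (\prod_j \det (1%:M + c2 *: (Z j *m (Z j)^T))).
  by rewrite /rhs -mulr_sumr ln_prod.
have dS : 0 < \det (1%:M + c2 *: \sum_j Z j *m (Z j)^T).
  apply: pd_det; apply: pd1G; apply: psd_scale (ltW c20) _.
  by apply: psd_sum => j; exact: psd_gram.
have Ppos : 0 < \prod_j \det (1%:M + c2 *: (Z j *m (Z j)^T)).
  by apply: prodr_gt0 => j _; exact: dpos.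
split.
- by rewrite Elhs Emid ler_pM2l.
- by rewrite Emid2 Erhs ler_pM2l // ler_ln ?posrE.
- rewrite Elhs Emid; split.
    move/(mulfI (lt0r_neq0 h2))/Ceq => H i j.
    have := H i j; rewrite /A => /addrI /eqP.
    rewrite -(inj_eq (scalerI (lt0r_neq0 (divr_gt0 e2 nR)))) !scalerA => /eqP.
    suff Hs : forall j0, eps ^+ 2 / n%:R * (n%:R / ((m j0)%:R * eps ^+ 2)) = (m j0)%:R^-1.
      by rewrite !Hs.
    by move=> j1; field; rewrite !lt0r_neq0.
  move=> H; congr (_ * _).
  have AE : forall j, A j = A j0.
    move=> j; rewrite /A.
    have Hs : forall j1, n%:R / ((m j1)%:R * eps ^+ 2) = n%:R / eps ^+ 2 * (m j1)%:R^-1.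
      by move=> j1; field; rewrite !lt0r_neq0.
    by rewrite !Hs -!scalerA (H j j0).
  rewrite (eq_bigr (fun j => w j *: A j0)); last by move=> j _; rewrite AE.
  rewrite -scaler_suml w1 scale1r.
  rewrite (eq_bigr (fun j => w j * ln (\det (A j0)))); last by move=> j _; rewrite AE.
  by rewrite -mulr_suml w1 mul1r.
- rewrite Emid2 Erhs; split.
    move/(mulfI (lt0r_neq0 h2)) => H.
    have Hd : \det (1%:M + c2 *: \sum_j Z j *m (Z j)^T) =
        \prod_j \det (1%:M + c2 *: (Z j *m (Z j)^T)).
      by apply: ln_inj; rewrite ?posrE.
    by move=> j1 j2 j12; exact: (proj1 Peq Hd j1 j2 j12 (ltn_ord j2)).
  by move=> H; rewrite (proj2 Peq) // => j1 j2 j12 _; apply: H.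
Qed.
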